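(* For integers $\ell\ge0$ and $a\in\mathbb{C}$ define the polynomial in $s$ \[ P_{\ell}(s,a)=\begin{cases}\dfrac{2^{\ell+1}}{(2\ell+1)!!}s^{2\ell+1}, & a=0,\\[8pt] \Bigl(-\dfrac{2}{a}\Bigr)^{\ell+1}\displaystyle\sum_{k=0}^{\ell}c^{(\ell)}_k a^{-k}s^{\ell-k}, & a\ne0,\end{cases} \] where $c^{(\ell)}_0=1$ and $c^{(\ell)}_k=\frac{1}{2^k k!}\prod_{j=1-k}^{k}(\ell+j)$ for $1\le k\le\ell$. Then for $s\neq0$, \[ \frac{\partial}{\partial s}\Bigl(\frac{1}{2s}\frac{\partial}{\partial s}\Bigr)^{\ell}\bigl\{e^{-as}P_{\ell}(s,a)\bigr\}=2e^{-as}. \]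
   Context: $(2\ell+1)!!=1\cdot3\cdots(2\ell+1)$. The operator $\bigl(\frac{1}{2s}\frac{\partial}{\partial s}\bigr)^{\ell}$ means $\ell$-fold application of $f\mapsto\frac{1}{2s}f'$. *)

(* Defs.v *)
From Stdlib Require Import Reals.
From Coquelicot Require Import Coquelicot.
Open Scope R_scope.

Fixpoint dfact (n : nat) : nat :=
  match n with
  | O => 1%nat
  | S O => 1%nat
  | S (S m) => (n * dfact m)%nat
  end.

Definition cexp (z : C) : C :=
  (exp (Re z) * cos (Im z), exp (Re z) * sin (Im z)).

(** c^{(l)}_k : c_0 = 1, c_k = 1/(2^k k!) * prod_{j=1-k}^{k} (l+j) for k >= 1.
    The product over j = 1-k, ..., k is written as prod_{i=0}^{2k-1} (l + (1-k) + i). *)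
Fixpoint prodR (n : nat) (f : nat -> R) : R :=
  match n with
  | O => 1
  | S m => prodR m f * f m
  end.

Definition coef (l k : nat) : R :=
  match k with
  | O => 1
  | S _ => / (2 ^ k * INR (Factorial.fact k)) *
           prodR (2 * k) (fun i => INR l + (1 - INR k) + INR i)
  end.

Definition P (l : nat) (s : R) (a : C) : C :=
  if Ceq_dec a 0 then
    RtoC (2 ^ (l + 1) / INR (dfact (2 * l + 1)) * s ^ (2 * l + 1))
  else
    (pow_n (- (2 / a)) (l + 1) *
     sum_n (fun k => RtoC (coef l k) * pow_n (/ a) k * RtoC (s ^ (l - k))) l)%C.

Definition DerC (f : R -> C) (s : R) : C :=
  (Derive (fun t => Re (f t)) s, Derive (fun t => Im (f t)) s).

Definition Lop (f : R -> C) : R -> C := fun s => (/ (2 * RtoC s) * DerC f s)%C.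

(* Main.v *)
Require Import Defs.
From Stdlib Require Import Reals Lra Lia.
From Coquelicot Require Import Coquelicot.
Open Scope R_scope.

Definition isD (F : R -> C) (x : R) (l : C) :=
  is_derive (fun t => fst (F t)) x (fst l) /\ is_derive (fun t => snd (F t)) x (snd l).

Lemma isD_eq F x l l' : isD F x l -> l = l' -> isD F x l'.
Proof. intros H ->; exact H. Qed.

Lemma isD_ext F G x l : (forall t, F t = G t) -> isD F x l -> isD G x l.
Proof.
  intros E [H1 H2]; split.
  - eapply is_derive_ext; [|exact H1]. intros t; simpl; now rewrite E.
  - eapply is_derive_ext; [|exact H2]. intros t; simpl; now rewrite E.
Qed.

Lemma isD_mult F G x f g : isD F x f -> isD G x g ->
  isD (fun t => F t * G t)%C x (f * G x + F x * g)%C.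
Proof.
  intros [F1 F2] [G1 G2]; split; simpl.
  - eapply is_derive_ext.
    { intros t. reflexivity. }
    simpl.
    eapply is_derive_ext with (f := fun t => fst (F t) * fst (G t) - snd (F t) * snd (G t)).
    { intros t. reflexivity. }
    evar (d : R). replace (fst f * fst (G x) - snd f * snd (G x) + (fst (F x) * fst g - snd (F x) * snd g)) with d.
    apply @is_derive_minus; (apply @is_derive_mult; [eassumption|eassumption|intros; apply Rmult_comm]).
    unfold d; unfold minus, plus, opp, mult; simpl; ring.
  - eapply is_derive_ext with (f := fun t => fst (F t) * snd (G t) + snd (F t) * fst (G t)).
    { intros t. reflexivity. }
    evar (d : R). replace (fst f * snd (G x) + snd f * fst (G x) + (fst (F x) * snd g + snd (F x) * fst g)) with d.
    apply @is_derive_plus; (apply @is_derive_mult; [eassumption|eassumption|intros; apply Rmult_comm]).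
    unfold d; unfold minus, plus, opp, mult; simpl; ring.
Qed.

Lemma isD_const (c : C) x : isD (fun _ => c) x 0%C.
Proof. split; simpl; auto_derive; auto. Qed.

Lemma isD_RtoC f x d : is_derive f x d -> isD (fun t => RtoC (f t)) x (RtoC d).
Proof. intros H; split; simpl; [exact H| auto_derive; auto]. Qed.

Lemma isD_cexp (a : C) x : isD (fun t => cexp (- (a * RtoC t))) x (- a * cexp (- (a * RtoC x)))%C.
Proof.
  destruct a as [ar ai]; unfold cexp; split; simpl.
  - auto_derive; auto. simpl. unfold Rminus; ring.
  - auto_derive; auto. simpl. unfold Rminus; ring.
Qed.

Lemma isD_plus F G x f g : isD F x f -> isD G x g ->
  isD (fun t => F t + G t)%C x (f + g)%C.
Proof.
  intros [F1 F2] [G1 G2]; split; simpl.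
  - apply (is_derive_plus (fun t => fst (F t)) (fun t => fst (G t))); auto.
  - apply (is_derive_plus (fun t => snd (F t)) (fun t => snd (G t))); auto.
Qed.

Lemma isD_sum (F : nat -> R -> C) (F' : nat -> C) x N :
  (forall k, (k <= N)%nat -> isD (F k) x (F' k)) ->
  isD (fun t => sum_n (fun k => F k t) N) x (sum_n F' N).
Proof.
  induction N; intros H.
  - rewrite sum_O. eapply isD_ext; [|apply (H 0%nat); lia]. intros t; now rewrite sum_O.
  - rewrite sum_Sn. eapply isD_ext; [| apply isD_plus; [apply IHN; intros; apply H; lia| apply (H (S N)); lia]].
    intros t; now rewrite sum_Sn.
Qed.

Lemma isD_is_derive F x l : isD F x l -> is_derive F x l.
Proof.
  intros [H1 H2].
  unfold is_derive.
  eapply filterdiff_ext.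
  2: eapply filterdiff_ext_lin.
  2: apply (filterdiff_comp'_2 (fun t => fst (F t)) (fun t => snd (F t)) (fun u v => (u, v) : C) x _ _ (fun u v => (u,v) : C) H1 H2).
  - intros t; simpl. now destruct (F t).
  - apply (filterdiff_ext_lin _ (fun t => t)).
    apply (filterdiff_ext (fun t => t)). intros [u v]; reflexivity. apply filterdiff_id.
    intros [u v]; reflexivity.
  - intros y. simpl. destruct l; reflexivity.
Qed.

Lemma isD_DerC F x l : isD F x l -> DerC F x = l.
Proof.
  intros [H1 H2]. unfold DerC.
  apply injective_projections; simpl; apply is_derive_unique; assumption.
Qed.

Definition pr (x : R) (n : nat) := prodR n (fun i => x + INR i).

Lemma pr_S1 x n : pr x (S n) = x * pr (x + 1) n.
Proof.
  revert x; induction n; intros x; unfold pr in *; simpl.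
  - ring.
  - simpl in IHn. rewrite IHn. destruct n; simpl; ring.
Qed.

Lemma pr_ext x y n : x = y -> pr x n = pr y n.
Proof. now intros ->. Qed.

Lemma coef_pr l k : coef l k = pr (INR l + (1 - INR k)) (2 * k) / (2 ^ k * INR (Factorial.fact k)).
Proof.
  destruct k; unfold coef, pr; simpl; [field|]. unfold Rdiv; ring.
Qed.

Lemma fact_pos k : 0 < INR (Factorial.fact k).
Proof. apply lt_0_INR. apply Factorial.lt_O_fact. Qed.

Lemma coef_zero l : coef l (S l) = 0.
Proof.
  rewrite coef_pr. replace (2 * S l)%nat with (S (2 * l + 1)) by lia.
  rewrite pr_S1. replace (INR l + (1 - INR (S l))) with 0 by (rewrite S_INR; ring).
  unfold Rdiv; ring.
Qed.

Lemma coef_rec l k : (k <= l)%nat ->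
  coef (S l) (S k) = coef l (S k) + INR (S l - k) * coef (S l) k.
Proof.
  intros Hk.
  rewrite !coef_pr.
  replace (2 * S k)%nat with (S (S (2 * k))) by lia.
  rewrite !pr_S1.
  rewrite minus_INR by lia.
  set (C0 := INR (S l) + (1 - INR k)).
  set (X := pr C0 (2 * k)).
  assert (E2 : pr (INR l + (1 - INR (S k)) + 1 + 1) (2 * k) = X)
    by (apply pr_ext; unfold C0; rewrite !S_INR; ring).
  assert (HY : pr (INR (S l) + (1 - INR (S k)) + 1 + 1) (2 * k) = X * (C0 + INR (2 * k)) / C0).
  { assert (HC : 0 < C0) by (unfold C0; rewrite S_INR; apply le_INR in Hk; pose proof (pos_INR l); lra).
    assert (H1 : pr C0 (S (2 * k)) = X * (C0 + INR (2 * k))) by reflexivity.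
    rewrite pr_S1 in H1.
    replace (pr (INR (S l) + (1 - INR (S k)) + 1 + 1) (2 * k)) with (pr (C0 + 1) (2 * k))
      by (apply pr_ext; unfold C0; rewrite !S_INR; ring).
    apply (Rmult_eq_reg_l C0); [rewrite H1; field; lra | lra]. }
  rewrite E2, HY.
  replace (Factorial.fact (S k)) with (S k * Factorial.fact k)%nat by reflexivity.
  pose proof (fact_pos k).
  pose proof (pow_lt 2 k ltac:(lra)).
  assert (HC : 0 < C0) by (unfold C0; rewrite S_INR; apply le_INR in Hk; pose proof (pos_INR l); lra).
  unfold C0 in *.
  rewrite !mult_INR. simpl pow. rewrite !S_INR. simpl INR. rewrite S_INR in HC.
  field. pose proof (pos_INR k). repeat split; lra.
Qed.
Ltac gen_sums := repeat match goal with |- context [sum_n ?f ?n] =>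
   let s := fresh "s" in let Hs := fresh in
   assert (Hs : exists s : C, s = sum_n f n) by (eexists; reflexivity);
   destruct Hs as [s Hs]; rewrite <- Hs; clear Hs end.
Ltac eqC := gen_sums; match goal with |- ?x = ?y => change (@eq C x y) end.

Lemma sum_shift (f : nat -> C) n : sum_n f (S n) = (f 0%nat + sum_n (fun k => f (S k)) n)%C.
Proof.
  induction n.
  - rewrite sum_Sn, !sum_O. reflexivity.
  - rewrite sum_Sn, IHn, sum_Sn. change (plus ?x ?y) with (x + y)%C. eqC; ring.
Qed.

Lemma sum_Cmult_l (c : C) (f : nat -> C) n : sum_n (fun k => c * f k)%C n = (c * sum_n f n)%C.
Proof.
  induction n.
  - rewrite !sum_O. reflexivity.
  - rewrite !sum_Sn, IHn. change (plus ?x ?y) with (x + y)%C. eqC; ring.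
Qed.

Lemma sum_Cplus (f g : nat -> C) n : sum_n (fun k => f k + g k)%C n = (sum_n f n + sum_n g n)%C.
Proof.
  induction n.
  - rewrite !sum_O. reflexivity.
  - rewrite !sum_Sn, IHn. change (plus ?x ?y) with (x + y)%C. eqC; ring.
Qed.

Definition Rs (al : C) l t := sum_n (fun k => (RtoC (coef l k * t ^ (l - k)) * pow_n al k)%C) l.
Definition Rd (al : C) l t := sum_n (fun k => (RtoC (coef l k * (INR (l - k) * t ^ Nat.pred (l - k))) * pow_n al k)%C) l.

Lemma Rs_identity al l t : Rs al (S l) t = (RtoC t * Rs al l t + al * Rd al (S l) t)%C.
Proof.
  unfold Rs, Rd.
  rewrite sum_shift.
  rewrite (sum_Sn (fun k => (RtoC (coef (S l) k * (INR (S l - k) * t ^ Nat.pred (S l - k))) * pow_n al k)%C) l).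
  assert (Hz : sum_n (fun k => (RtoC (coef l k * t ^ (l - k)) * pow_n al k)%C) l
             = sum_n (fun k => (RtoC (coef l k * t ^ (l - k)) * pow_n al k)%C) (S l)).
  { rewrite sum_Sn. rewrite coef_zero. change (plus ?x ?y) with (x + y)%C.
    rewrite Rmult_0_l. eqC; ring. }
  rewrite Hz, sum_shift. clear Hz.
  rewrite Nat.sub_diag. change (INR 0) with 0. rewrite Rmult_0_l, Rmult_0_r.
  change (plus ?x ?y) with (x + y)%C.
 
  rewrite Cmult_0_l, Cplus_0_r.
  rewrite Cmult_plus_distr_l.
  rewrite <- !sum_Cmult_l.
  rewrite <- Cplus_assoc.
  rewrite <- sum_Cplus.
  f_equal.
  - change (coef (S l) 0) with 1. change (coef l 0) with 1. rewrite !Rmult_1_l, !Nat.sub_0_r.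
    change (t ^ S l) with (t * t ^ l). rewrite RtoC_mult. eqC; ring.
  - apply sum_n_ext_loc. intros k Hk.
    change (plus ?x ?y) with (x + y)%C. change (mult ?x ?y) with (x * y)%C.
    change (pow_n al (S k)) with (al * pow_n al k)%C.
    rewrite coef_rec by lia.
    replace (S l - S k)%nat with (l - k)%nat by lia.
    replace (Nat.pred (S l - k)) with (l - k)%nat by lia.
    assert (E : coef l (S k) * t ^ (l - k) = t * (coef l (S k) * t ^ (l - S k))).
    { destruct (Nat.eq_dec k l) as [->|Hne].
      - rewrite coef_zero. ring.
      - replace (l - k)%nat with (S (l - S k)) by lia. simpl. ring. }
    assert (E2 : (coef l (S k) + INR (S l - k) * coef (S l) k) * t ^ (l - k)
      = t * (coef l (S k) * t ^ (l - S k)) + coef (S l) k * (INR (S l - k) * t ^ (l - k))).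
    { rewrite <- E. ring. }
    rewrite E2, RtoC_plus, RtoC_mult. eqC; ring.
Qed.

Ltac gen_pows := repeat match goal with |- context [pow_n ?f ?n] =>
   let s := fresh "p" in let Hs := fresh in
   assert (Hs : exists s : C, s = pow_n f n) by (eexists; reflexivity);
   destruct Hs as [s Hs]; rewrite <- Hs; clear Hs end.

Lemma polyD c n x : is_derive (fun t => c * t ^ n) x (c * (INR n * x ^ Nat.pred n)).
Proof. auto_derive; auto. ring. Qed.

Definition Q (a : C) l := fun t : R => (cexp (- (a * RtoC t)) * P l t a)%C.

Lemma P_eq l t a : a <> RtoC 0 -> P l t a = (pow_n (- (2 / a)) (l + 1) * Rs (/ a) l t)%C.
Proof.
  intros Ha. unfold P. destruct (Ceq_dec a 0) as [E|_]; [exfalso; apply Ha; exact E|].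
  f_equal. unfold Rs. apply sum_n_ext. intros k. rewrite RtoC_mult.
  gen_pows. eqC. ring.
Qed.

Lemma Rs_D al l x : isD (Rs al l) x (Rd al l x).
Proof.
  unfold Rs, Rd. apply isD_sum. intros k _.
  eapply isD_eq. apply isD_mult. apply isD_RtoC. apply polyD. apply isD_const.
  gen_pows. eqC. ring.
Qed.

Lemma dfact_SS n : dfact (S (S n)) = (S (S n) * dfact n)%nat.
Proof. reflexivity. Qed.

Lemma dfact_pos n : (0 < dfact n)%nat.
Proof.
  assert (H : forall n, (0 < dfact n)%nat /\ (0 < dfact (S n))%nat).
  { induction n0 as [|n0 [IH1 IH2]]; [simpl; lia|]. split; [exact IH2|].
    rewrite dfact_SS. lia. }
  apply H.
Qed.

Lemma step_nz a l x : a <> RtoC 0 -> isD (Q a (S l)) x (2 * RtoC x * Q a l x)%C.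
Proof.
  intros Ha. unfold Q.
  eapply isD_ext. { intros t. rewrite (P_eq (S l) t a Ha). reflexivity. }
  eapply isD_eq. apply isD_mult. apply isD_cexp. apply isD_mult. apply isD_const. apply Rs_D.
  rewrite (P_eq l x a Ha).
  rewrite (Rs_identity (/a) l x).
  replace (S l + 1)%nat with (S (l + 1)) by lia.
  change (pow_n (- (2 / a))%C (S (l + 1))) with (- (2 / a) * pow_n (- (2 / a))%C (l + 1))%C.
  gen_pows. eqC. field. exact Ha.
Qed.

Lemma base_nz a x : a <> RtoC 0 -> isD (Q a 0) x (2 * cexp (- (a * RtoC x)))%C.
Proof.
  intros Ha. unfold Q.
  eapply isD_ext. { intros t. rewrite (P_eq 0 t a Ha). reflexivity. }
  eapply isD_eq. apply isD_mult. apply isD_cexp. apply isD_mult. apply isD_const. apply Rs_D.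
  unfold Rs, Rd. rewrite !sum_O. simpl. change (coef 0 0) with 1.
  rewrite Rmult_0_l, !Rmult_1_l.
  change (mult ?x ?y) with (x * y)%C. change (@one C_Ring) with (RtoC 1). eqC. field. exact Ha.
Qed.

Lemma step_z l x : isD (Q (RtoC 0) (S l)) x (2 * RtoC x * Q (RtoC 0) l x)%C.
Proof.
  unfold Q, P. destruct (Ceq_dec (RtoC 0) 0) as [_|H]; [|now exfalso; apply H].
  eapply isD_eq. apply isD_mult. apply isD_cexp. apply isD_RtoC. apply polyD.
  replace (2 * S l + 1)%nat with (S (S (2 * l + 1))) by lia.
  rewrite dfact_SS.
  assert (Hd := dfact_pos (2 * l + 1)). apply lt_INR in Hd. simpl INR in Hd at 1.
  assert (E : 2 ^ (S l + 1) / INR (S (S (2 * l + 1)) * dfact (2 * l + 1)) *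
   (INR (S (S (2 * l + 1))) * x ^ Nat.pred (S (S (2 * l + 1))))
   = 2 * x * (2 ^ (l + 1) / INR (dfact (2 * l + 1)) * x ^ (2 * l + 1))).
  { rewrite mult_INR. simpl Nat.pred. replace (S l + 1)%nat with (S (l + 1)) by lia.
    simpl pow. field. split; [lra|]. rewrite !S_INR. pose proof (pos_INR (2*l+1)). lra. }
  rewrite E. rewrite !RtoC_mult.
  replace (- RtoC 0)%C with (RtoC 0) by (apply injective_projections; simpl; ring).
  rewrite !Cmult_0_l, Cplus_0_l. eqC. ring.
Qed.

Lemma base_z x : isD (Q (RtoC 0) 0) x (2 * cexp (- (RtoC 0 * RtoC x)))%C.
Proof.
  unfold Q, P. destruct (Ceq_dec (RtoC 0) 0) as [_|H]; [|now exfalso; apply H].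
  eapply isD_eq. apply isD_mult. apply isD_cexp. apply isD_RtoC. apply polyD.
  replace (- RtoC 0)%C with (RtoC 0) by (apply injective_projections; simpl; ring).
  rewrite !Cmult_0_l, Cplus_0_l. simpl.
  replace (2 / 1 * (1 * 1)) with 2 by field. replace (2 * 1 / 1 * (1 * 1)) with 2 by field. eqC. ring.
Qed.

Lemma step a l x : isD (Q a (S l)) x (2 * RtoC x * Q a l x)%C.
Proof. destruct (Ceq_dec a (RtoC 0)) as [->|H]; [apply step_z|now apply step_nz]. Qed.

Lemma base a x : isD (Q a 0) x (2 * cexp (- (a * RtoC x)))%C.
Proof. destruct (Ceq_dec a (RtoC 0)) as [->|H]; [apply base_z|now apply base_nz]. Qed.

Lemma DerC_ext_loc F G t : locally t (fun u => F u = G u) -> DerC F t = DerC G t.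
Proof.
  intros H. unfold DerC. f_equal; apply Derive_ext_loc;
  (eapply filter_imp; [|exact H]); intros u Hu; simpl; now rewrite Hu.
Qed.

Lemma loc_nz t : t <> 0 -> locally t (fun u => u <> 0).
Proof.
  intros Ht. exists (mkposreal (Rabs t) (Rabs_pos_lt t Ht)).
  intros y Hy Hy0. subst y. unfold ball in Hy; simpl in Hy. unfold AbsRing_ball in Hy.
  unfold minus, plus, opp, abs in Hy; simpl in Hy.
  rewrite Rplus_0_l, Rabs_Ropp in Hy. lra.
Qed.

Lemma iter_eq a n : forall m t, t <> 0 -> Nat.iter n Lop (Q a (n + m)) t = Q a m t.
Proof.
  induction n; intros m t Ht.
  - reflexivity.
  - simpl Nat.iter. unfold Lop.
    replace (S (n + m))%nat with (n + S m)%nat by lia.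
    rewrite (DerC_ext_loc _ (Q a (S m))).
    + rewrite (isD_DerC _ _ _ (step a m t)).
      assert (RtoC t <> RtoC 0) by (intros E; apply Ht; now injection E).
      eqC. field. exact H.
    + eapply filter_imp; [|apply (loc_nz t Ht)]. intros u Hu. now apply IHn.
Qed.

Theorem mainTheorem7 (l : nat) (a : C) (s : R) :
  s <> 0 ->
  is_derive (Nat.iter l Lop (fun t : R => (cexp (- (a * RtoC t)) * P l t a)%C)) s
            (2 * cexp (- (a * RtoC s)))%C.
Proof.
  intros Hs.
  change (fun t : R => (cexp (- (a * RtoC t)) * P l t a)%C) with (Q a l).
  apply (is_derive_ext_loc (Q a 0)).
  - eapply filter_imp; [|apply (loc_nz s Hs)]. intros u Hu.
    rewrite <- (iter_eq a l 0 u Hu). now rewrite Nat.add_0_r.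
  - apply isD_is_derive. apply base.
Qed.
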